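(* Let $\phi_2$ be a topological flow on a compact metric space $(M_2,\mathrm{dist}_2)$ whose limit set $L(\phi_2)$ is a finite set of singularities, each Lyapunov stable or Lyapunov unstable. Let $\varepsilon_0>0$ and $r_2>0$, and put $F=M_2\setminus\bigcup_{p\in\mathrm{Sing}(\phi_2)}B(r_2,p)$. Then there exist $d_1>0$ and $S_0>0$ such that whenever $\xi_2$ is a $d_1$-pseudotrajectory of $\phi_2$ with $\xi_2(s_0)\in F$ for some $s_0\in\mathbb{R}$, there exist a Lyapunov unstable point $p\in\mathrm{Sing}(\phi_2)$ and a Lyapunov stable point $q\in\mathrm{Sing}(\phi_2)$ such that $\xi_2(t+s_0)\in B(r_2,p)$ for all $t\le -S_0$, $\xi_2(t+s_0)\in B(r_2,q)$ for all $t\ge S_0$, and $\mathrm{dist}_2(\xi_2(t+s_0),\phi_2(t,\xi_2(s_0)))<\min\{r_2,\varepsilon_0/4\}$ for all $t\in[-S_0,2S_0]$.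
   Context: A topological flow is a continuous $\phi:\mathbb{R}\times M\to M$ with $\phi(0,x)=x$, $\phi(s+t,x)=\phi(s,\phi(t,x))$; $\mathrm{Sing}$ is its set of fixed points. A singularity $p$ is Lyapunov stable if for every neighborhood $V$ of $p$ there is a neighborhood $U$ of $p$ with $\phi(t,x)\in V$ for all $t\ge0$, $x\in U$; Lyapunov unstable if the same holds for $t\le0$. $L(\phi)$ is the union over all $x$ of the $\omega$- and $\alpha$-limit sets of $x$. A $d$-pseudotrajectory is a map $\xi:\mathbb{R}\to M$ with $\mathrm{dist}(\xi(t+s),\phi(s,\xi(t)))<d$ for all $t\in\mathbb{R}$, $s\in[0,1]$. $B(r,p)$ is the open ball. *)

(* Defs.v *)
From Stdlib Require Import Reals List.
Open Scope R_scope.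

Section Defs.
Context {M : Type} (dist : M -> M -> R).

Definition is_metric : Prop :=
  (forall x y, 0 <= dist x y) /\
  (forall x y, dist x y = 0 <-> x = y) /\
  (forall x y, dist x y = dist y x) /\
  (forall x y z, dist x z <= dist x y + dist y z).

Definition ball (r : R) (p : M) : M -> Prop := fun x => dist p x < r.

Definition is_open (U : M -> Prop) : Prop :=
  forall x, U x -> exists e, 0 < e /\ forall y, ball e x y -> U y.

Definition is_compact_space : Prop :=
  forall (I : Type) (U : I -> M -> Prop),
    (forall i, is_open (U i)) -> (forall x, exists i, U i x) ->
    exists l : list I, forall x, exists i, In i l /\ U i x.

Definition nbhd (p : M) (V : M -> Prop) : Prop :=
  exists e, 0 < e /\ forall y, ball e p y -> V y.

Variable phi : R -> M -> M.

Definition is_flow : Prop :=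
  (forall t x eps, 0 < eps -> exists delta, 0 < delta /\
     forall s y, Rabs (s - t) < delta -> dist x y < delta ->
       dist (phi t x) (phi s y) < eps) /\
  (forall x, phi 0 x = x) /\
  (forall s t x, phi (s + t) x = phi s (phi t x)).

Definition Sing (p : M) : Prop := forall t, phi t p = p.

Definition lyap_stable (p : M) : Prop :=
  forall V, nbhd p V -> exists U, nbhd p U /\
    forall x t, U x -> 0 <= t -> V (phi t x).

Definition lyap_unstable (p : M) : Prop :=
  forall V, nbhd p V -> exists U, nbhd p U /\
    forall x t, U x -> t <= 0 -> V (phi t x).

Definition omega_limit (x y : M) : Prop :=
  forall eps T, 0 < eps -> exists t, T <= t /\ dist (phi t x) y < eps.
Definition alpha_limit (x y : M) : Prop :=
  forall eps T, 0 < eps -> exists t, t <= T /\ dist (phi t x) y < eps.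

Definition limit_set (y : M) : Prop :=
  exists x, omega_limit x y \/ alpha_limit x y.

Definition pseudotrajectory (d : R) (xi : R -> M) : Prop :=
  forall t s, 0 <= s <= 1 -> dist (xi (t + s)) (phi s (xi t)) < d.

End Defs.

(* Main.v *)
Require Import Defs.
From Stdlib Require Import Reals List Lra Lia ZArith Classical ClassicalEpsilon.
Require Coquelicot.Compactness.
Open Scope R_scope.

Lemma nat_above (u : R) : exists n : nat, u <= INR n.
Proof.
  destruct (archimed u) as [H1 H2].
  destruct (Z_le_gt_dec (up u) 0) as [Hz|Hz].
  - exists 0%nat. simpl. apply IZR_le in Hz. lra.
  - exists (Z.to_nat (up u)). rewrite INR_IZR_INZ, Z2Nat.id by lia. lra.
Qed.

Lemma list_upper {A : Type} (f : A -> R) (l : list A) :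
  exists T, forall a, In a l -> f a <= T.
Proof.
  induction l as [|a l [T HT]].
  - exists 0. intros a [].
  - exists (Rmax (f a) T). intros b [<-|Hb].
    + apply Rmax_l.
    + eapply Rle_trans; [apply HT; auto | apply Rmax_r].
Qed.

Lemma list_lower_pos {A : Type} (P : A -> Prop) (g : A -> R) (l : list A) :
  (forall a, P a -> 0 < g a) ->
  exists m, 0 < m /\ forall a, In a l -> P a -> m <= g a.
Proof.
  intros Hg. induction l as [|a l [m [Hm HT]]].
  - exists 1. split; [lra|]. intros a [].
  - destruct (classic (P a)) as [Pa|nPa].
    + exists (Rmin (g a) m). split.
      * apply Rmin_glb_lt; auto.
      * intros b [<-|Hb] Pb.
        -- apply Rmin_l.
        -- eapply Rle_trans; [apply Rmin_r | apply HT; auto].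
    + exists m. split; auto. intros b [<-|Hb] Pb; [contradiction|auto].
Qed.

Section Gen.
Context {M : Type} (d : M -> M -> R).
Hypothesis Hm : is_metric d.
Hypothesis Hc : is_compact_space d.

Lemma d_nn x y : 0 <= d x y.
Proof. apply Hm. Qed.
Lemma d_xx x : d x x = 0.
Proof. apply Hm. reflexivity. Qed.
Lemma d_sym x y : d x y = d y x.
Proof. apply Hm. Qed.
Lemma d_tri x y z : d x z <= d x y + d y z.
Proof. apply Hm. Qed.
Lemma d_pos x y : x <> y -> 0 < d x y.
Proof.
  intros H. destruct (d_nn x y) as [h|h]; auto.
  exfalso. apply H. apply Hm. auto.
Qed.

Lemma ball_open e y : is_open d (ball d e y).
Proof.
  intros x Hx. unfold ball in *. exists (e - d y x). split; [lra|].
  intros z Hz. unfold ball in Hz. pose proof (d_tri y x z). lra.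
Qed.

Lemma open_const (P : Prop) U : is_open d U -> is_open d (fun x => P /\ U x).
Proof.
  intros HU x [HP Hx]. destruct (HU x Hx) as [e [He H]]. exists e. split; auto.
Qed.

Lemma open_far e y : is_open d (fun x => e < d y x).
Proof.
  intros x Hx. exists (d y x - e). split; [lra|].
  intros z Hz. unfold ball in Hz. pose proof (d_tri y z x). rewrite (d_sym z x) in H. lra.
Qed.

Lemma cluster (Q : R -> M -> Prop) :
  (forall T T' x, T' <= T -> Q T x -> Q T' x) -> (forall T, exists x, Q T x) ->
  exists y, forall eps T, 0 < eps -> exists x, Q T x /\ d x y < eps.
Proof.
  intros Hmono Hne. apply NNPP. intros Hn.
  set (U := fun (i : M * R * R) => let '(y, eps, T) := i in
        fun x => (0 < eps /\ forall z, Q T z -> ~ d z y < eps) /\ d y x < eps).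
  destruct (Hc _ U) as [l Hl].
  - intros [[y eps] T]. apply open_const, ball_open.
  - intros x. assert (H1 := not_ex_all_not _ _ Hn x). simpl in H1.
    apply not_all_ex_not in H1. destruct H1 as [eps H1].
    apply not_all_ex_not in H1. destruct H1 as [T H1].
    apply imply_to_and in H1. destruct H1 as [Heps H1].
    exists (x, eps, T). simpl. split; [split; auto|].
    + intros z Hz Hd. apply H1. exists z. auto.
    + rewrite d_xx. auto.
  - destruct (list_upper (fun i : M * R * R => let '(_, _, T) := i in T) l) as [T HT].
    destruct (Hne T) as [x0 Hx0]. destruct (Hl x0) as [[[y eps] T'] [Hin Hu]].
    simpl in Hu. destruct Hu as [[Heps H] Hd]. apply (H x0).
    + apply (Hmono T); auto. apply (HT _ Hin).
    + rewrite d_sym. auto.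
Qed.

Section Flow.
Variable phi : R -> M -> M.
Hypothesis Hf : is_flow d phi.

Lemma phi0 x : phi 0 x = x.
Proof. apply Hf. Qed.
Lemma phiadd s t x : phi (s + t) x = phi s (phi t x).
Proof. apply Hf. Qed.

Lemma preimage_open t e q : is_open d (fun x => d q (phi t x) < e).
Proof.
  intros x Hx. set (eps := e - d q (phi t x)).
  destruct (proj1 Hf t x eps) as [de [Hde H]]; [unfold eps; lra|].
  exists de. split; auto. intros y Hy. unfold ball in Hy.
  assert (H1 := H t y). rewrite Rminus_diag, Rabs_R0 in H1.
  specialize (H1 Hde Hy). pose proof (d_tri q (phi t x) (phi t y)). unfold eps in H1. lra.
Qed.

Lemma UC a b e : 0 < e -> exists de, 0 < de /\
  forall s x y, a <= s <= b -> d x y < de -> d (phi s x) (phi s y) < e.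
Proof.
  intros He.
  set (P := fun x de => forall s y z, a <= s <= b -> d x y < de -> d x z < de ->
                           d (phi s y) (phi s z) < e).
  assert (Step1 : forall x, exists de, 0 < de /\ P x de).
  { intros x.
    assert (H : forall t, exists de, 0 < de /\ forall s y, Rabs (s - t) < de -> d x y < de ->
                  d (phi t x) (phi s y) < e / 2).
    { intros t. apply (proj1 Hf). lra. }
    set (f := fun t => proj1_sig (constructive_indefinite_description _ (H t))).
    assert (Hfs : forall t, 0 < f t /\ forall s y, Rabs (s - t) < f t -> d x y < f t ->
                  d (phi t x) (phi s y) < e / 2).
    { intros t. unfold f. destruct (constructive_indefinite_description _ (H t)). auto. }
    set (delta := fun t => mkposreal (f t) (proj1 (Hfs t))).
    destruct (Coquelicot.Compactness.compactness_value_1d a b delta) as [dd Hdd].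
    exists dd. split; [apply cond_pos|].
    intros s y z Hs Hy Hz. apply NNPP. intros Hn. apply (Hdd s Hs).
    intros [t [Ht [H1 H2]]]. apply Hn. change (pos (delta t)) with (f t) in H1, H2.
    destruct (Hfs t) as [_ Ht2].
    assert (Hy' : d x y < f t) by lra. assert (Hz' : d x z < f t) by lra.
    assert (A1 := Ht2 s y H1 Hy'). assert (A2 := Ht2 s z H1 Hz').
    assert (T3 := d_tri (phi s y) (phi t x) (phi s z)). rewrite (d_sym (phi s y) (phi t x)) in T3. lra. }
  set (U := fun (i : M * R) => let '(x, de) := i in
        fun y => (0 < de /\ P x de) /\ d x y < de / 2).
  destruct (Hc _ U) as [l Hl].
  - intros [x de]. apply open_const, ball_open.
  - intros y. destruct (Step1 y) as [de [Hde HP]]. exists (y, de). simpl.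
    rewrite d_xx. split; [auto|lra].
  - destruct (list_lower_pos (fun i : M * R => let '(x, de) := i in 0 < de /\ P x de)
       (fun i : M * R => let '(x, de) := i in de / 2) l) as [m [Hm0 Hmin]].
    { intros [x de] [H _]. lra. }
    exists m. split; auto. intros s y z Hs Hyz.
    destruct (Hl y) as [[x de] [Hin Hu]]. simpl in Hu. destruct Hu as [[Hde HP] Hxy].
    assert (Hmd := Hmin _ Hin (conj Hde HP)). simpl in Hmd.
    apply (HP s y z Hs); [lra|]. pose proof (d_tri x y z). lra.
Qed.

Lemma pt_mono dd dd' xi : pseudotrajectory d phi dd xi -> dd <= dd' ->
  pseudotrajectory d phi dd' xi.
Proof. intros H Hd t s Hs. specialize (H t s Hs). lra. Qed.

Lemma shadow_nat (n : nat) : forall e, 0 < e -> exists dd, 0 < dd /\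
  forall xi, pseudotrajectory d phi dd xi -> forall tau s, 0 <= s <= INR n ->
    d (xi (tau + s)) (phi s (xi tau)) < e.
Proof.
  induction n as [|n IH]; intros e He.
  - exists 1. split; [lra|]. intros xi _ tau s Hs. simpl in Hs.
    replace s with 0 by lra. rewrite Rplus_0_r, phi0, d_xx. auto.
  - destruct (UC 0 1 (e/2)) as [de [Hde HU]]; [lra|].
    destruct (IH (Rmin de e)) as [dd' [Hdd' H']]; [apply Rmin_glb_lt; auto|].
    exists (Rmin dd' (e/2)). split; [apply Rmin_glb_lt; lra|].
    intros xi Hxi tau s Hs. rewrite S_INR in Hs.
    destruct (Rle_or_lt s (INR n)) as [Hsn|Hsn].
    + assert (H1 := H' xi (pt_mono _ _ _ Hxi (Rmin_l _ _)) tau s ltac:(lra)).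
      pose proof (Rmin_r de e). lra.
    + set (u := s - INR n).
      assert (H1 := Hxi (tau + INR n) u ltac:(unfold u; lra)).
      assert (H2 := H' xi (pt_mono _ _ _ Hxi (Rmin_l _ _)) tau (INR n)
                 ltac:(split; [apply pos_INR|lra])).
      assert (H3 := HU u _ _ ltac:(unfold u; lra) (Rlt_le_trans _ _ _ H2 (Rmin_l _ _))).
      rewrite <- phiadd in H3. replace (u + INR n) with s in H3 by (unfold u; lra).
      replace (tau + INR n + u) with (tau + s) in H1 by (unfold u; lra).
      pose proof (Rmin_r dd' (e/2)).
      pose proof (d_tri (xi (tau + s)) (phi u (xi (tau + INR n))) (phi s (xi tau))). lra.
Qed.

Lemma shadow T e : 0 < e -> exists dd, 0 < dd /\
  forall xi, pseudotrajectory d phi dd xi -> forall tau s, - T <= s <= T ->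
    d (xi (tau + s)) (phi s (xi tau)) < e.
Proof.
  intros He. destruct (nat_above T) as [n Hn].
  destruct (UC (- T) 0 e He) as [de [Hde HU]].
  destruct (shadow_nat n e He) as [d1 [Hd1 H1]].
  destruct (shadow_nat n de Hde) as [d2 [Hd2 H2]].
  exists (Rmin d1 d2). split; [apply Rmin_glb_lt; auto|].
  intros xi Hxi tau s Hs. destruct (Rle_or_lt 0 s) as [Hs0|Hs0].
  - apply (H1 xi (pt_mono _ _ _ Hxi (Rmin_l _ _))). lra.
  - assert (A := H2 xi (pt_mono _ _ _ Hxi (Rmin_r _ _)) (tau + s) (- s) ltac:(lra)).
    replace (tau + s + - s) with tau in A by lra.
    assert (B := HU s _ _ ltac:(lra) A). rewrite <- phiadd in B.
    replace (s + - s) with 0 in B by lra. rewrite phi0 in B. rewrite d_sym. auto.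
Qed.

Lemma omega_exists x : exists z, omega_limit d phi x z.
Proof.
  destruct (cluster (fun T y => exists t, T <= t /\ y = phi t x)) as [z Hz].
  - intros T T' y HT [t [Ht ->]]. exists t. split; [lra|auto].
  - intros T. exists (phi T x). exists T. split; [lra|auto].
  - exists z. intros eps T Heps. destruct (Hz eps T Heps) as [y [[t [Ht ->]] Hd]].
    exists t. auto.
Qed.

Hypothesis Hl : exists l : list M, forall y, limit_set d phi y -> In y l.
Hypothesis Hs : forall y, limit_set d phi y ->
     Sing phi y /\ (lyap_stable d phi y \/ lyap_unstable d phi y).

Lemma sing_limit p : Sing phi p -> limit_set d phi p.
Proof.
  intros Hp. exists p. left. intros eps T Heps. exists T. split; [lra|].
  rewrite Hp, d_xx. auto.
Qed.

Lemma omega_limit_set x z : omega_limit d phi x z -> limit_set d phi z.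
Proof. intros H. exists x. auto. Qed.

Lemma sep q : exists eps, 0 < eps /\ forall p, limit_set d phi p -> d q p < 2 * eps -> p = q.
Proof.
  destruct Hl as [l Hl'].
  assert (H : exists m, 0 < m /\ forall p, In p l -> p <> q -> m <= d q p).
  { destruct (list_lower_pos (fun p => p <> q) (d q) l) as [m [Hm0 Hmm]].
    - intros a Ha. apply d_pos. auto.
    - exists m. auto. }
  destruct H as [m [Hm0 Hmm]]. exists (m / 2). split; [lra|].
  intros p Hp Hd. apply NNPP. intros Hne. specialize (Hmm p (Hl' p Hp) Hne). lra.
Qed.

Lemma trap q r : Sing phi q -> lyap_stable d phi q -> 0 < r ->
  exists rho D, 0 < rho /\ 0 < D /\ forall xi, pseudotrajectory d phi D xi ->
    forall tau, d q (xi tau) < rho -> forall u, 0 <= u -> d q (xi (tau + u)) < r.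
Proof.
  intros Hq Hst Hr.
  destruct (sep q) as [e0 [He0 Hsep]].
  set (eps := Rmin e0 (r / 2)).
  assert (Heps : 0 < eps) by (apply Rmin_glb_lt; lra).
  assert (Heps1 : eps <= e0) by apply Rmin_l.
  assert (Heps2 : eps <= r / 2) by apply Rmin_r.
  destruct (Hst (ball d eps q)) as [U1 [[h1 [Hh1 HU1]] HA1]].
  { exists eps. auto. }
  set (eta := Rmin h1 eps).
  assert (Heta : 0 < eta) by (apply Rmin_glb_lt; lra).
  assert (Heta1 : eta <= h1) by apply Rmin_l.
  assert (Heta2 : eta <= eps) by apply Rmin_r.
  assert (FA : forall y, d q y < eta -> forall t, 0 <= t -> d q (phi t y) < eps).
  { intros y Hy t Ht. apply (HA1 y t); auto. apply HU1. unfold ball. lra. }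
  destruct (Hst (ball d (eta / 4) q)) as [U2 [[h2 [Hh2 HU2]] HA2]].
  { exists (eta / 4). split; [lra|auto]. }
  assert (FB : forall y, d q y < h2 -> forall t, 0 <= t -> d q (phi t y) < eta / 4).
  { intros y Hy t Ht. apply (HA2 y t); auto. }
  assert (Attr : forall y, d q y < eta -> forall e T, 0 < e -> exists t, T <= t /\ d (phi t y) q < e).
  { intros y Hy. destruct (omega_exists y) as [z Hz].
    assert (Hzq : z = q).
    { apply (Hsep z (omega_limit_set _ _ Hz)).
      destruct (Rle_or_lt (d q z) eps) as [H|H]; [lra|].
      destruct (Hz (d q z - eps) 0) as [t [Ht Hd]]; [lra|].
      assert (A := FA y Hy t Ht). pose proof (d_tri q (phi t y) z). lra. }
    subst z. exact Hz. }
  set (U := fun (i : option R) => match i with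
            | None => fun y => eta / 2 < d q y
            | Some t => fun y => 0 <= t /\ d q (phi t y) < h2 end).
  destruct (Hc _ U) as [l Hl2].
  - intros [t|]; simpl.
    + apply open_const, preimage_open.
    + apply open_far.
  - intros y. destruct (Rlt_or_le (eta / 2) (d q y)) as [H|H].
    + exists None. simpl. auto.
    + destruct (Attr y ltac:(lra) h2 0 Hh2) as [t [Ht Hd]]. exists (Some t). simpl.
      rewrite d_sym. auto.
  - destruct (list_upper (fun i => match i with None => 0 | Some t => t end) l) as [T0 HT0].
    set (T1 := Rmax 1 T0).
    assert (HT1 : 1 <= T1) by apply Rmax_l.
    assert (FC : forall y, d q y <= eta / 2 -> d q (phi T1 y) < eta / 4).
    { intros y Hy. destruct (Hl2 y) as [[t|] [Hin Hu]]; simpl in Hu.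
      - destruct Hu as [Ht Hd]. assert (Ht0 := HT0 _ Hin). simpl in Ht0.
        assert (Ht1 : t <= T1) by (eapply Rle_trans; [apply Ht0|apply Rmax_r]).
        assert (A := FB _ Hd (T1 - t) ltac:(lra)).
        rewrite <- phiadd in A. replace (T1 - t + t) with T1 in A by lra. auto.
      - lra. }
    destruct (shadow T1 (eta / 4)) as [D [HD HDs]]; [lra|].
    exists (eta / 2), D. split; [lra|]. split; [auto|].
    intros xi Hxi tau Htau.
    assert (Step : forall n : nat, d q (xi (tau + INR n * T1)) < eta / 2).
    { induction n as [|n IH].
      - simpl. rewrite Rmult_0_l, Rplus_0_r. auto.
      - rewrite S_INR. assert (A := FC _ (Rlt_le _ _ IH)).
        assert (B := HDs xi Hxi (tau + INR n * T1) T1 ltac:(lra)).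
        replace (tau + (INR n + 1) * T1) with (tau + INR n * T1 + T1) by ring.
        pose proof (d_tri q (phi T1 (xi (tau + INR n * T1))) (xi (tau + INR n * T1 + T1))).
        rewrite (d_sym (phi T1 _) (xi _)) in H. lra. }
    assert (All : forall n : nat, forall u, 0 <= u <= INR n * T1 -> d q (xi (tau + u)) < r).
    { induction n as [|n IH]; intros u Hu.
      - simpl in Hu. replace u with 0 by lra. rewrite Rplus_0_r. lra.
      - rewrite S_INR, Rmult_plus_distr_r, Rmult_1_l in Hu. destruct (Rle_or_lt u (INR n * T1)) as [Hun|Hun].
        + apply IH. lra.
        + set (v := u - INR n * T1).
          assert (A := FA _ (Rlt_trans _ _ eta (Step n) ltac:(lra)) v ltac:(unfold v; lra)).
          assert (B := HDs xi Hxi (tau + INR n * T1) v ltac:(unfold v; lra)).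
          replace (tau + INR n * T1 + v) with (tau + u) in B by (unfold v; ring).
          pose proof (d_tri q (phi v (xi (tau + INR n * T1))) (xi (tau + u))).
          rewrite (d_sym (phi v _) (xi _)) in H. lra. }
    intros u Hu. destruct (nat_above u) as [n Hn]. apply (All n).
    split; auto. pose proof (pos_INR n). nra.
Qed.

Lemma forward_part r2 : 0 < r2 -> exists T e D, 0 < e /\ 0 < D /\
  forall x, (forall p, Sing phi p -> ~ ball d r2 p x) ->
  exists q, Sing phi q /\ lyap_stable d phi q /\ exists t, 0 <= t <= T /\
    forall xi, pseudotrajectory d phi D xi -> forall tau,
      d (xi (tau + t)) (phi t x) < e -> forall u, t <= u -> ball d r2 q (xi (tau + u)).
Proof.
  intros Hr2.
  set (Cond := fun (i : R * M * R * R) => let '(t, q, rho, D) := i in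
      0 <= t /\ Sing phi q /\ lyap_stable d phi q /\ 0 < rho /\ 0 < D /\
      forall xi, pseudotrajectory d phi D xi ->
      forall tau, d q (xi tau) < rho -> forall u, 0 <= u -> d q (xi (tau + u)) < r2).
  set (U := fun (i : option (R * M * R * R)) => match i with
            | None => fun y => exists p, Sing phi p /\ d p y < r2
            | Some j => fun y => Cond j /\ (let '(t, q, rho, D) := j in d q (phi t y) < rho / 2)
            end).
  destruct (Hc _ U) as [l Hl2].
  - intros [[[[t q] rho] D]|]; simpl.
    + apply open_const, preimage_open.
    + intros y [p [Hp Hd]]. destruct (ball_open r2 p y Hd) as [e [He H]].
      exists e. split; auto. intros z Hz. exists p. split; auto. apply H. auto.
  - intros y. destruct (classic (exists p, Sing phi p /\ d p y < r2)) as [H|H].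
    + exists None. auto.
    + destruct (omega_exists y) as [z Hz].
      destruct (Hs z (omega_limit_set _ _ Hz)) as [Hsz [Hstab|Hunst]].
      * destruct (trap z r2 Hsz Hstab Hr2) as [rho [D [Hrho [HD Htr]]]].
        destruct (Hz (rho / 2) 0) as [t [Ht Hd]]; [lra|].
        exists (Some (t, z, rho, D)). simpl. split; [repeat split; auto|].
        rewrite d_sym. auto.
      * exfalso. assert (Hzy : r2 <= d z y).
        { destruct (Rlt_or_le (d z y) r2) as [h|h]; auto. exfalso. apply H. exists z. auto. }
        destruct (Hunst (ball d (d z y) z)) as [U1 [[h1 [Hh1 HU1]] HA1]].
        { exists (d z y). split; [lra|auto]. }
        destruct (Hz h1 0) as [t [Ht Hd]]; auto.
        assert (A := HA1 (phi t y) (- t) (HU1 (phi t y) ltac:(unfold ball; rewrite d_sym; exact Hd)) ltac:(lra)).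
        rewrite <- phiadd in A. replace (- t + t) with 0 in A by ring. rewrite phi0 in A.
        unfold ball in A. lra.
  - destruct (list_upper (fun i => match i with None => 0 | Some (t, _, _, _) => t end) l)
      as [T HT].
    destruct (list_lower_pos (fun i => match i with None => False | Some j => Cond j end)
       (fun i => match i with None => 1 | Some (_, _, rho, _) => rho / 2 end) l) as [e [He Hemin]].
    { intros [[[[t q] rho] D]|] Hc'; simpl in *; [|contradiction]. destruct Hc' as (_&_&_&?&_). lra. }
    destruct (list_lower_pos (fun i => match i with None => False | Some j => Cond j end)
       (fun i => match i with None => 1 | Some (_, _, _, D) => D end) l) as [D0 [HD0 HDmin]].
    { intros [[[[t q] rho] D]|] Hc'; simpl in *; [|contradiction]. destruct Hc' as (_&_&_&_&?&_). lra. }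
    exists T, e, D0. split; auto. split; auto.
    intros x HF. destruct (Hl2 x) as [[[[[t q] rho] D]|] [Hin Hu]]; simpl in Hu.
    + destruct Hu as [Hcond Hd]. assert (Hcond' := Hcond). simpl in Hcond'.
      destruct Hcond' as (Ht & Hsq & Hstq & Hrho & HD & Htr).
      exists q. split; auto. split; auto. exists t. split.
      { split; auto. apply (HT _ Hin). }
      intros xi Hxi tau Hsh u Hu.
      assert (He' := Hemin _ Hin Hcond). assert (HD' := HDmin _ Hin Hcond). simpl in He', HD'.
      assert (A : d q (xi (tau + t)) < rho).
      { pose proof (d_tri q (phi t x) (xi (tau + t))). rewrite (d_sym (phi t x)) in H. lra. }
      assert (B := Htr xi (pt_mono _ _ _ Hxi HD') (tau + t) A (u - t) ltac:(lra)).
      unfold ball. replace (tau + u) with (tau + t + (u - t)) by ring. auto.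
    + destruct Hu as [p [Hp Hd]]. exfalso. apply (HF p Hp). auto.
Qed.

End Flow.
End Gen.

Section Rev.
Context {M : Type} (d : M -> M -> R).
Hypothesis Hm : is_metric d.
Hypothesis Hc : is_compact_space d.
Variable phi : R -> M -> M.
Hypothesis Hf : is_flow d phi.
Let psi := fun t x => phi (- t) x.

Lemma rev_flow : is_flow d psi.
Proof.
  destruct Hf as [Hcont [H0 Hadd]]. unfold psi. split; [|split].
  - intros t x eps Heps. destruct (Hcont (- t) x eps Heps) as [de [Hde H]].
    exists de. split; auto. intros s y Hs Hy. apply H; auto.
    replace (- s - - t) with (- (s - t)) by ring. rewrite Rabs_Ropp. auto.
  - intros x. rewrite Ropp_0. auto.
  - intros s t x. rewrite <- Hadd. f_equal. ring.
Qed.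

Lemma rev_sing p : Sing psi p <-> Sing phi p.
Proof.
  unfold Sing, psi. split; intros H t.
  - rewrite <- (Ropp_involutive t). apply H.
  - apply H.
Qed.

Lemma rev_stable p : lyap_unstable d phi p -> lyap_stable d psi p.
Proof.
  intros H V HV. destruct (H V HV) as [U [HU HA]]. exists U. split; auto.
  intros x t Hx Ht. unfold psi. apply HA; auto. lra.
Qed.

Lemma rev_unstable p : lyap_stable d phi p -> lyap_unstable d psi p.
Proof.
  intros H V HV. destruct (H V HV) as [U [HU HA]]. exists U. split; auto.
  intros x t Hx Ht. unfold psi. apply HA; auto. lra.
Qed.

Lemma rev_stable_back p : lyap_stable d psi p -> lyap_unstable d phi p.
Proof.
  intros H V HV. destruct (H V HV) as [U [HU HA]]. exists U. split; auto.
  intros x t Hx Ht. assert (A := HA x (- t) Hx ltac:(lra)). unfold psi in A.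
  rewrite Ropp_involutive in A. auto.
Qed.

Lemma rev_limit y : limit_set d psi y -> limit_set d phi y.
Proof.
  intros [x [Ho|Ha]]; exists x; [right|left]; intros eps T Heps.
  - destruct (Ho eps (- T) Heps) as [t [Ht Hd]]. exists (- t). split; [lra|auto].
  - destruct (Ha eps (- T) Heps) as [t [Ht Hd]]. exists (- t). split; [lra|auto].
Qed.

Lemma rev_pt e : 0 < e -> exists dd, 0 < dd /\ forall xi,
  pseudotrajectory d phi dd xi -> pseudotrajectory d psi e (fun t => xi (- t)).
Proof.
  intros He. destruct (shadow d Hm Hc phi Hf 1 e He) as [dd [Hdd H]].
  exists dd. split; auto. intros xi Hxi t s Hs. unfold psi.
  assert (A := H xi Hxi (- t) (- s) ltac:(lra)).
  replace (- (t + s)) with (- t + - s) by ring. auto.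
Qed.

End Rev.

Theorem mainTheorem8 (M2 : Type) (dist2 : M2 -> M2 -> R) (phi2 : R -> M2 -> M2) :
  is_metric dist2 ->
  is_compact_space dist2 ->
  is_flow dist2 phi2 ->
  (exists l : list M2, forall y, limit_set dist2 phi2 y -> In y l) ->
  (forall y, limit_set dist2 phi2 y ->
     Sing phi2 y /\ (lyap_stable dist2 phi2 y \/ lyap_unstable dist2 phi2 y)) ->
  forall eps0 r2 : R, 0 < eps0 -> 0 < r2 ->
  let F := fun x : M2 => forall p, Sing phi2 p -> ~ ball dist2 r2 p x in
  exists d1 S0 : R, 0 < d1 /\ 0 < S0 /\
    forall xi2 : R -> M2, pseudotrajectory dist2 phi2 d1 xi2 ->
    forall s0 : R, F (xi2 s0) ->
    exists p q : M2,
      Sing phi2 p /\ lyap_unstable dist2 phi2 p /\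
      Sing phi2 q /\ lyap_stable dist2 phi2 q /\
      (forall t, t <= - S0 -> ball dist2 r2 p (xi2 (t + s0))) /\
      (forall t, S0 <= t -> ball dist2 r2 q (xi2 (t + s0))) /\
      (forall t, - S0 <= t <= 2 * S0 ->
         dist2 (xi2 (t + s0)) (phi2 t (xi2 s0)) < Rmin r2 (eps0 / 4)).
Proof.
  intros Hm Hc Hf Hl Hs eps0 r2 He0 Hr2 F.
  set (psi := fun t x => phi2 (- t) x).
  assert (Hf' : is_flow dist2 psi) by (apply rev_flow; auto).
  assert (Hl' : exists l : list M2, forall y, limit_set dist2 psi y -> In y l).
  { destruct Hl as [l Hl0]. exists l. intros y Hy. apply Hl0. apply (rev_limit dist2 phi2). auto. }
  assert (Hs' : forall y, limit_set dist2 psi y ->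
     Sing psi y /\ (lyap_stable dist2 psi y \/ lyap_unstable dist2 psi y)).
  { intros y Hy. destruct (Hs y (rev_limit dist2 phi2 y Hy)) as [H1 [H2|H2]].
    - split; [apply rev_sing; auto|]. right. apply rev_unstable. auto.
    - split; [apply rev_sing; auto|]. left. apply rev_stable. auto. }
  destruct (forward_part dist2 Hm Hc phi2 Hf Hl Hs r2 Hr2) as [T1 [e1 [D1 [He1 [HD1 FP1]]]]].
  destruct (forward_part dist2 Hm Hc psi Hf' Hl' Hs' r2 Hr2) as [T2 [e2 [D2 [He2 [HD2 FP2]]]]].
  set (S0 := Rmax 1 (Rmax T1 T2)).
  assert (HS1 : 1 <= S0) by apply Rmax_l.
  assert (HS2 : T1 <= S0) by (eapply Rle_trans; [apply Rmax_l|apply Rmax_r]).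
  assert (HS3 : T2 <= S0) by (eapply Rle_trans; [apply Rmax_r|apply Rmax_r]).
  set (ee := Rmin (Rmin e1 e2) (Rmin r2 (eps0 / 4))).
  assert (Hee : 0 < ee) by (repeat apply Rmin_glb_lt; lra).
  assert (Hee1 : ee <= e1) by (eapply Rle_trans; [apply Rmin_l|apply Rmin_l]).
  assert (Hee2 : ee <= e2) by (eapply Rle_trans; [apply Rmin_l|apply Rmin_r]).
  assert (Hee3 : ee <= Rmin r2 (eps0 / 4)) by apply Rmin_r.
  destruct (shadow dist2 Hm Hc phi2 Hf (2 * S0) ee Hee) as [dA [HdA Sh]].
  destruct (rev_pt dist2 Hm Hc phi2 Hf D2 HD2) as [dB [HdB Rp]].
  exists (Rmin (Rmin dA dB) D1), S0.
  split; [repeat apply Rmin_glb_lt; auto|]. split; [lra|].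
  intros xi Hxi s0 HF.
  assert (HxA : pseudotrajectory dist2 phi2 dA xi).
  { eapply pt_mono; [apply Hxi|]. eapply Rle_trans; [apply Rmin_l|apply Rmin_l]. }
  assert (HxB : pseudotrajectory dist2 phi2 dB xi).
  { eapply pt_mono; [apply Hxi|]. eapply Rle_trans; [apply Rmin_l|apply Rmin_r]. }
  assert (HxD : pseudotrajectory dist2 phi2 D1 xi).
  { eapply pt_mono; [apply Hxi|]. apply Rmin_r. }
  assert (Sh' : forall s, - (2 * S0) <= s <= 2 * S0 ->
     dist2 (xi (s0 + s)) (phi2 s (xi s0)) < ee) by (intros; apply Sh; auto).
  destruct (FP1 (xi s0) HF) as [q [Hq1 [Hq2 [t1 [Ht1 Htr1]]]]].
  assert (HF' : forall p, Sing psi p -> ~ ball dist2 r2 p (xi s0)).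
  { intros p Hp. apply HF. apply (rev_sing phi2). auto. }
  destruct (FP2 (xi s0) HF') as [p [Hp1 [Hp2 [t2 [Ht2 Htr2]]]]].
  exists p, q. split; [apply (rev_sing phi2); auto|].
  split; [apply (rev_stable_back dist2 phi2); auto|].
  split; auto. split; auto. split; [|split].
  - assert (Hpt := Rp xi HxB).
    assert (A : dist2 (xi (- (- s0 + t2))) (psi t2 (xi s0)) < e2).
    { unfold psi. replace (- (- s0 + t2)) with (s0 + - t2) by ring.
      assert (B := Sh' (- t2) ltac:(lra)). lra. }
    intros t Ht. assert (C := Htr2 (fun t => xi (- t)) Hpt (- s0) A (- t) ltac:(lra)).
    simpl in C. replace (t + s0) with (- (- s0 + - t)) by ring. auto.
  - intros t Ht. assert (A := Sh' t1 ltac:(lra)).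
    assert (C := Htr1 xi HxD s0 ltac:(lra) t ltac:(lra)).
    rewrite Rplus_comm. auto.
  - intros t Ht. rewrite Rplus_comm. assert (A := Sh' t ltac:(lra)). lra.
Qed.
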